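(* If $X$ is a metric space with weak hyperbolic property C, then $X$ has straight finite decomposition complexity (i.e. the metric family $\{X\}$ has sFDC).
   Context: For $R>0$, a family $\mathcal U$ of nonempty subsets of a metric space is $R$-disjoint if $d(A,B)>R$ for all distinct $A,B\in\mathcal U$, where $d(A,B)=\inf\{d(a,b):a\in A,b\in B\}$. $B_r(x)$ denotes the open ball of radius $r$ about $x$. A subset $U\subset X$ is $(N,R)$-large scale doubling if for every $x\in X$ and every $r\ge R$, $B_{2r}(x)\cap U$ can be covered by $N$ balls of radius $r$ with centers in $X$. A family $\mathcal U$ of subsets of $X$ is weakly uniformly large scale doubling if there is $(N,R)$ such that each $U\in\mathcal U$ is $(N,R)$-large scale doubling. $X$ has weak hyperbolic property C if for every sequence $R_0,R_1,\dots$ of positive reals there exist $n\ge0$ and $R_i$-disjoint families $\mathcal U_i$ ($i=0,\dots,n$) such that $\bigcup_{i=0}^n\mathcal U_i$ is a weakly uniformly large scale doubling cover of $X$. A metric family is a collection of metric spaces (subsets carry the restricted metric); it is uniformly bounded if the supremum of diameters of its members is finite. For metric families $\mathcal X,\mathcal Y$ and $R>0$, $\mathcal X\xrightarrow{R}\mathcal Y$ means every $X\in\mathcal X$ satisfies $X=\bigcup(\mathcal U_1\cup\mathcal U_2)$ for some $R$-disjoint families $\mathcal U_1,\mathcal U_2$ with $\mathcal U_1\cup\mathcal U_2\subset\mathcal Y$. A metric family $\mathcal X$ has sFDC if for every sequence $R_0\le R_1\le\cdots$ of positive reals there exist $n\in\mathbb N$ and metric families $\mathcal U_0,\dots,\mathcal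 U_n$ with $\mathcal U_n$ uniformly bounded and $\mathcal X\xrightarrow{R_0}\mathcal U_0\xrightarrow{R_1}\cdots\xrightarrow{R_n}\mathcal U_n$. *)

(* Defs.v *)
From Stdlib Require Import Reals.
Open Scope R_scope.

Section MetricDefs.
Variables (X : Type) (d : X -> X -> R).

Definition is_metric : Prop :=
  (forall x y, 0 <= d x y) /\
  (forall x y, d x y = 0 <-> x = y) /\
  (forall x y, d x y = d y x) /\
  (forall x y z, d x z <= d x y + d y z).

Definition subset := X -> Prop.
Definition family := subset -> Prop.

Definition ball (x : X) (r : R) : subset := fun y => d x y < r.

Definition set_distinct (A B : subset) : Prop := ~ (forall x, A x <-> B x).

(* d(A,B) > Rr, where d(A,B) is the infimum of d(a,b): there is r > Rr
   with r <= d(a,b) for all a in A, b in B *)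
Definition set_dist_gt (Rr : R) (A B : subset) : Prop :=
  exists r, Rr < r /\ forall a b, A a -> B b -> r <= d a b.

Definition R_disjoint (Rr : R) (U : family) : Prop :=
  (forall A, U A -> exists x, A x) /\
  (forall A B, U A -> U B -> set_distinct A B -> set_dist_gt Rr A B).

Definition ls_doubling (N : nat) (Rr : R) (U : subset) : Prop :=
  forall (x : X) (r : R), Rr <= r ->
    exists c : nat -> X,
      forall y, ball x (2 * r) y -> U y ->
        exists i, (i < N)%nat /\ ball (c i) r y.

Definition weakly_unif_lsd (F : family) : Prop :=
  exists (N : nat) (Rr : R), 0 < Rr /\ forall U, F U -> ls_doubling N Rr U.

Definition weak_hyp_C : Prop :=
  forall Rs : nat -> R, (forall i, 0 < Rs i) ->
    exists (n : nat) (Us : nat -> family),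
      (forall i, (i <= n)%nat -> R_disjoint (Rs i) (Us i)) /\
      (forall x, exists i U, (i <= n)%nat /\ Us i U /\ U x) /\
      weakly_unif_lsd (fun U => exists i, (i <= n)%nat /\ Us i U).

Definition unif_bounded (F : family) : Prop :=
  exists D : R, forall A, F A -> forall x y, A x -> A y -> d x y <= D.

Definition decomposes (Rr : R) (Xf Yf : family) : Prop :=
  forall A, Xf A ->
    exists U1 U2 : family,
      R_disjoint Rr U1 /\ R_disjoint Rr U2 /\
      (forall B, U1 B \/ U2 B -> Yf B) /\
      (forall x, A x <-> exists B, (U1 B \/ U2 B) /\ B x).

Definition sFDC (Xf : family) : Prop :=
  forall Rs : nat -> R, (forall i, 0 < Rs i) -> (forall i, Rs i <= Rs (S i)) ->
    exists (n : nat) (Us : nat -> family),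
      unif_bounded (Us n) /\
      decomposes (Rs 0%nat) Xf (Us 0%nat) /\
      (forall i, (i < n)%nat -> decomposes (Rs (S i)) (Us i) (Us (S i))).

Definition whole_family : family := fun A => forall x, A x.

End MetricDefs.

(* Main.v *)
Require Import Defs.
From Stdlib Require Import Reals Lra Lia List.
From Stdlib Require Import ClassicalEpsilon.
From mathcomp Require classical_sets.
Import ListNotations.
Open Scope R_scope.

Lemma maxsep_ex (X : Type) (d : X -> X -> R) (S : X -> Prop) (a : R) :
  (forall x, d x x = 0) -> (forall x y, d x y = d y x) -> 0 < a ->
  exists Z : X -> Prop, (forall z, Z z -> S z) /\
    (forall z z', Z z -> Z z' -> z <> z' -> a <= d z z') /\
    (forall y, S y -> exists z, Z z /\ d y z < a).
Proof.
intros d0 dsym ha.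
pose (P := fun A : X -> Prop => (forall z, A z -> S z) /\
    (forall z z', A z -> A z' -> z <> z' -> a <= d z z')).
destruct (@classical_sets.Zorn_bigcup X P) as [A [PA Amax]].
- intros F FP Ftot. split.
  + intros z [B FB Bz]. exact (proj1 (FP B FB) z Bz).
  + intros z z' [B FB Bz] [B' FB' Bz'] hne.
    destruct (Ftot B B' FB FB') as [h|h].
    * exact (proj2 (FP B' FB') z z' (h z Bz) Bz' hne).
    * exact (proj2 (FP B FB) z z' Bz (h z' Bz') hne).
- exists A. split; [exact (proj1 PA)|split; [exact (proj2 PA)|]].
  intros y Sy. apply Classical_Prop.NNPP. intro hn.
  assert (far : forall z, A z -> a <= d y z).
  { intros z Az. destruct (Rlt_le_dec (d y z) a) as [h|h]; [|exact h].
    exfalso; apply hn; exists z; now split. }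
  apply (Amax (fun x => A x \/ x = y)).
  + split.
    * intros t At. now left.
    * intro hsub. pose proof (hsub y (or_intror eq_refl)) as Ay.
      apply hn. exists y. split; [exact Ay| rewrite d0; exact ha].
  + split.
    * intros z [Az|Hz]; [exact (proj1 PA z Az)|subst; exact Sy].
    * intros z z' [Az|Hz] [Az'|Hz'] hne.
      -- exact (proj2 PA z z' Az Az' hne).
      -- subst. rewrite dsym. exact (far z Az).
      -- subst. exact (far z' Az').
      -- subst. now elim hne.
Qed.

Lemma FOP_filter {A} (Rl : A -> A -> Prop) (f : A -> bool) l :
  ForallOrdPairs Rl l -> ForallOrdPairs Rl (filter f l).
Proof.
induction 1 as [|a l Ha Hl IH]; simpl; [constructor|].
destruct (f a); [|exact IH]. constructor; [|exact IH].
rewrite Forall_forall in *. intros x Hx. apply filter_In in Hx. apply Ha, Hx.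
Qed.

Lemma filter_split_len {A} (f : A -> bool) l :
  length l = (length (filter f l) + length (filter (fun z => negb (f z)) l))%nat.
Proof. induction l as [|a l IH]; simpl; [reflexivity|]. destruct (f a); simpl; lia. Qed.

Lemma filter_filter_le {A} (f h : A -> bool) l :
  (length (filter f (filter h l)) <= length (filter f l))%nat.
Proof.
induction l as [|a l IH]; simpl; [lia|].
destruct (h a); simpl; destruct (f a); simpl; lia.
Qed.

Lemma count_classes {A} (g : A -> nat) (M : nat) : forall N' l,
  (forall z, In z l -> (g z < N')%nat) ->
  (forall i, (length (filter (fun z => Nat.eqb (g z) i) l) <= M)%nat) ->
  (length l <= N' * M)%nat.
Proof.
induction N' as [|n IH]; intros l Hl Hc.
- destruct l as [|a l]; simpl; [lia|]. specialize (Hl a (or_introl eq_refl)). lia.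
- rewrite (filter_split_len (fun z => Nat.eqb (g z) n) l).
  assert (H2 : (length (filter (fun z => negb (Nat.eqb (g z) n)) l) <= n * M)%nat).
  { apply IH.
    - intros z Hz. apply filter_In in Hz. destruct Hz as [Hz Hn].
      specialize (Hl z Hz). apply Bool.negb_true_iff, Nat.eqb_neq in Hn. lia.
    - intros i. eapply Nat.le_trans; [apply filter_filter_le|apply Hc]. }
  specialize (Hc n). simpl. lia.
Qed.

Lemma packing (X : Type) (d : X -> X -> R) (Hm : is_metric X d) (U : X -> Prop)
  (N : nat) (rho : R) (HU : ls_doubling X d N rho U) (r0 delta : R)
  (hrho : 0 < rho) (hr0 : rho <= r0) (hdel : 2 * r0 <= delta) :
  forall k x (l : list X),
  (forall z, In z l -> U z /\ ball X d x (2 ^ k * r0) z) ->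
  ForallOrdPairs (fun u v => delta <= d u v) l -> (length l <= N ^ k)%nat.
Proof.
destruct Hm as [dpos [d0 [dsym dtri]]].
induction k as [|k IH]; intros x l Hl Hs.
- simpl. destruct l as [|u [|v l]]; simpl; try lia. exfalso.
  inversion Hs as [|a l' Ha Hl' E]; subst.
  inversion Ha as [|b l'' Hb]; subst.
  destruct (Hl u (or_introl eq_refl)) as [_ Bu].
  destruct (Hl v (or_intror (or_introl eq_refl))) as [_ Bv].
  unfold ball in *. specialize (dtri u x v). rewrite (dsym u x) in dtri. lra.
- assert (h1 : 1 <= 2 ^ k) by (apply pow_R1_Rle; lra).
  assert (hr : rho <= 2 ^ k * r0) by nra.
  destruct (HU x (2 ^ k * r0) hr) as [c Hc].
  destruct (choice (fun (z : X) (i : nat) =>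
     (ball X d x (2 * (2 ^ k * r0)) z /\ U z) -> (i < N)%nat /\ ball X d (c i) (2 ^ k * r0) z))
    as [g Hg].
  { intros z. destruct (excluded_middle_informative (ball X d x (2 * (2 ^ k * r0)) z /\ U z)) as [h|h].
    - destruct (Hc z (proj1 h) (proj2 h)) as [i Hi]. exists i. intros _. exact Hi.
    - exists 0%nat. intros h'. contradiction. }
  rewrite Nat.pow_succ_r'.
  apply (count_classes g).
  + intros z Hz. destruct (Hl z Hz) as [Uz Bz]. apply (Hg z). split; [|exact Uz].
    unfold ball in *. simpl in Bz. lra.
  + intros i. apply (IH (c i)).
    * intros z Hz. apply filter_In in Hz. destruct Hz as [Hz Hi].
      apply Nat.eqb_eq in Hi. destruct (Hl z Hz) as [Uz Bz]. split; [exact Uz|].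
      rewrite <- Hi. apply (Hg z). split; [|exact Uz]. unfold ball in *. simpl in Bz. lra.
    * apply FOP_filter, Hs.
Qed.

Section Main.
Variables (X : Type) (d : X -> X -> R).
Hypothesis Hm : is_metric X d.

Lemma decomp_peel (Rr : R) (A : X -> Prop) (G : Defs.family X) (Y : X -> Prop) (Yf : Defs.family X) :
  R_disjoint X d Rr G -> (forall B, G B -> Yf B) -> ((exists x, Y x) -> Yf Y) ->
  (forall x, A x <-> (exists B, G B /\ B x) \/ Y x) ->
  exists U1 U2 : Defs.family X,
      R_disjoint X d Rr U1 /\ R_disjoint X d Rr U2 /\
      (forall B, U1 B \/ U2 B -> Yf B) /\
      (forall x, A x <-> exists B, (U1 B \/ U2 B) /\ B x).
Proof.
intros HG GY YY HA.
exists G, (fun B => B = Y /\ exists x, Y x). split; [exact HG|split; [split|split]].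
- intros B [-> Hx]. exact Hx.
- intros B B' [-> _] [-> _] hd. exfalso. apply hd. intro; tauto.
- intros B [HB|[-> Hx]]; [exact (GY B HB)|exact (YY Hx)].
- intros x. rewrite HA. split.
  + intros [[B [HB Bx]]|Yx]; [exists B; tauto|exists Y; split; [right; split; [reflexivity|exists x; exact Yx]|exact Yx]].
  + intros [B [[HB|[-> _]] Bx]]; [left; exists B; tauto|right; exact Bx].
Qed.

Lemma decomp_triv (Rr : R) (A : X -> Prop) (Yf : Defs.family X) :
  ((exists x, A x) -> Yf A) ->
  exists U1 U2 : Defs.family X,
      R_disjoint X d Rr U1 /\ R_disjoint X d Rr U2 /\
      (forall B, U1 B \/ U2 B -> Yf B) /\
      (forall x, A x <-> exists B, (U1 B \/ U2 B) /\ B x).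
Proof.
intros H. apply (decomp_peel Rr A (fun _ => False) A Yf).
- split; [intros B []|intros B B' []].
- intros B [].
- exact H.
- intros x. split; [tauto|intros [[B [[] _]]|h]; exact h].
Qed.

Fixpoint Yb (V : nat -> Defs.family X) (j : nat) : X -> Prop :=
  match j with
  | O => fun _ => True
  | S j => fun x => Yb V j x /\ ~ (exists W, V j W /\ W x)
  end.

Definition Gp (V : nat -> Defs.family X) (j : nat) : Defs.family X :=
  fun B => (exists x, B x) /\ exists W, V j W /\ B = (fun x => W x /\ Yb V j x).

Definition Ph1 (V : nat -> Defs.family X) (n i : nat) : Defs.family X :=
  fun B => (exists j, (j <= i)%nat /\ Gp V j B) \/
           ((i < n)%nat /\ B = Yb V (S i) /\ exists x, Yb V (S i) x).

Lemma Yb_not V : forall m x, Yb V m x -> forall j, (j < m)%nat -> ~ (exists W, V j W /\ W x).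
Proof.
induction m as [|m IH]; intros x Hx j Hj; [lia|].
destruct Hx as [Hx Hn]. destruct (Nat.eq_dec j m) as [->|hne]; [exact Hn|].
apply (IH x Hx). lia.
Qed.

Lemma Gp_disj V j Rr : R_disjoint X d Rr (V j) -> R_disjoint X d Rr (Gp V j).
Proof.
intros [Hne Hd]. split.
- intros B [Hx _]. exact Hx.
- intros B B' [_ [W [VW ->]]] [_ [W' [VW' ->]]] hd.
  assert (hWW : set_distinct X W W').
  { intros heq. apply hd. intros x. rewrite (heq x). tauto. }
  destruct (Hd W W' VW VW' hWW) as [r [hr Hr]]. exists r. split; [exact hr|].
  intros a b [Wa _] [Wb _]. exact (Hr a b Wa Wb).
Qed.

Lemma ph1_peel V n Rr i :
  (forall x, exists j W, (j <= n)%nat /\ V j W /\ W x) ->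
  R_disjoint X d Rr (V i) -> (i <= n)%nat ->
  forall A, (forall x, A x <-> Yb V i x) ->
  exists U1 U2 : Defs.family X,
      R_disjoint X d Rr U1 /\ R_disjoint X d Rr U2 /\
      (forall B, U1 B \/ U2 B -> Ph1 V n i B) /\
      (forall x, A x <-> exists B, (U1 B \/ U2 B) /\ B x).
Proof.
intros Hcov Hd Hi A HA.
apply (decomp_peel Rr A (Gp V i) (Yb V (S i))).
- apply Gp_disj, Hd.
- intros B HB. left. exists i. split; [lia|exact HB].
- intros [x Hx]. right. split; [|split; [reflexivity|exists x; exact Hx]].
  destruct (Nat.eq_dec i n) as [->|hne]; [|lia].
  exfalso. destruct (Hcov x) as [j [W [hj [VW Wx]]]].
  apply (Yb_not V (S n) x Hx j); [lia|]. exists W. tauto.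
- intros x. rewrite HA. split.
  + intros Yx. destruct (Classical_Prop.classic (exists W, V i W /\ W x)) as [[W [VW Wx]]|hn].
    * left. exists (fun x => W x /\ Yb V i x). split; [split; [exists x; tauto|exists W; tauto]|tauto].
    * right. simpl. tauto.
  + intros [[B [[_ [W [_ ->]]] Bx]]|Yx]; [exact (proj2 Bx)|exact (proj1 Yx)].
Qed.

Section Phase2.
Variables (Zs : (X -> Prop) -> (X -> Prop)) (b : R).

Fixpoint rem (P : X -> Prop) (j : nat) : X -> Prop :=
  match j with
  | O => P
  | S j => fun x => rem P j x /\ ~ (exists z, Zs (rem P j) z /\ d z x < b)
  end.

Definition piece P j z : X -> Prop := fun x => rem P j x /\ d z x < b.

Definition Ph2 (Fin : Defs.family X) (k : nat) : Defs.family X :=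
  fun B => exists P, Fin P /\
    ((exists j z, (j < k)%nat /\ Zs (rem P j) z /\ B = piece P j z /\ exists x, B x) \/
     (B = rem P k /\ exists x, rem P k x)).

Lemma FOP_map_seq {A} (f : nat -> A) (Rl : A -> A -> Prop) : forall K s,
  (forall i j, (s <= i)%nat -> (i < j)%nat -> (j < s + K)%nat -> Rl (f i) (f j)) ->
  ForallOrdPairs Rl (map f (seq s K)).
Proof.
induction K as [|K IH]; intros s H; simpl; [constructor|].
constructor.
- apply Forall_forall. intros x Hx. apply in_map_iff in Hx. destruct Hx as [j [<- Hj]].
  apply in_seq in Hj. apply H; lia.
- apply IH. intros i j h1 h2 h3. apply H; lia.
Qed.

Lemma rem_mono P : forall j j' x, (j <= j')%nat -> rem P j' x -> rem P j x.
Proof.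
intros j j' x H. induction H as [|j' H IH]; [tauto|]. intros [h _]. exact (IH h).
Qed.

Lemma ph2_step (a : R) (Fin : Defs.family X) Rr k :
  (forall S z z', Zs S z -> Zs S z' -> z <> z' -> a <= d z z') ->
  Rr < a - 2 * b ->
  decomposes X d Rr (Ph2 Fin k) (Ph2 Fin (S k)).
Proof.
destruct Hm as [dpos [d0 [dsym dtri]]].
intros HZ hR A [P [FP [[j [z [hj [Zz [-> hne]]]]]|[-> hne]]]].
- apply decomp_triv. intros _. exists P. split; [exact FP|left].
  exists j, z. repeat split; try tauto. lia.
- apply (decomp_peel Rr (rem P k)
    (fun B => exists z, Zs (rem P k) z /\ B = piece P k z /\ exists x, B x) (rem P (S k))).
  + split.
    * intros B [z [_ [_ h]]]. exact h.
    * intros B B' [z [Zz [-> _]]] [z' [Zz' [-> _]]] hd.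
      assert (hzz : z <> z') by (intros ->; apply hd; tauto).
      pose proof (HZ _ z z' Zz Zz' hzz) as hzz'.
      exists (a - 2 * b). split; [exact hR|].
      intros u v [_ hu] [_ hv].
      pose proof (dtri z u z'). pose proof (dtri u v z'). rewrite (dsym v z') in *. lra.
  + intros B [z [Zz [-> hx]]]. exists P. split; [exact FP|left].
    exists k, z. repeat split; try tauto. lia.
  + intros hx. exists P. split; [exact FP|right]. split; [reflexivity|exact hx].
  + intros x. split.
    * intros hx. destruct (Classical_Prop.classic (exists z, Zs (rem P k) z /\ d z x < b)) as [[z [Zz hz]]|hn].
      -- left. exists (piece P k z). split; [exists z; split; [exact Zz|split; [reflexivity|exists x; split; assumption]]|split; assumption].
      -- right. simpl. tauto.
    * intros [[B [[z [_ [-> _]]] Bx]]|Yx]; [exact (proj1 Bx)|exact (proj1 Yx)].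
Qed.

Lemma rem_empty (a : R) P N rho r0 :
  (forall S z, Zs S z -> S z) ->
  (forall S y, S y -> exists z, Zs S z /\ d y z < a) ->
  ls_doubling X d N rho P -> 0 < rho -> rho <= r0 -> b = 2 * r0 -> a = 8 * r0 ->
  forall y, ~ rem P (S (N ^ 3)) y.
Proof.
intros HZs HZc HP hrho hr0 hb ha y Hy.
set (K := S (N ^ 3)) in *.
destruct (choice (fun (j : nat) (z : X) => (j < K)%nat -> Zs (rem P j) z /\ d y z < a)) as [zf Hzf].
{ intros j. destruct (Compare_dec.lt_dec j K) as [hj|hj].
  - destruct (HZc (rem P j) y) as [z Hz]; [apply (rem_mono P j K); [lia|exact Hy]|].
    exists z. intros _. exact Hz.
  - exists y. intros h. contradiction. }
assert (Hpk := packing X d Hm P N rho HP r0 b hrho hr0 ltac:(lra) 3 y (map zf (seq 0 K))).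
rewrite length_map, length_seq in Hpk. enough (K <= N ^ 3)%nat by lia.
apply Hpk.
- intros z Hz. apply in_map_iff in Hz. destruct Hz as [j [<- Hj]]. apply in_seq in Hj.
  destruct (Hzf j ltac:(lia)) as [Zz dz]. split.
  + apply (rem_mono P 0 j); [lia|]. apply HZs, Zz.
  + unfold ball. simpl. lra.
- apply FOP_map_seq. intros i j _ hij hj.
  destruct (Hzf j ltac:(lia)) as [Zj _]. destruct (Hzf i ltac:(lia)) as [Zi _].
  assert (Hr : rem P (S i) (zf j)) by (apply (rem_mono P (S i) j); [lia|apply HZs, Zj]).
  destruct Hr as [_ Hn]. destruct (Rlt_le_dec (d (zf i) (zf j)) b) as [h|h]; [|exact h].
  exfalso. apply Hn. exists (zf i). split; assumption.
Qed.

End Phase2.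

Lemma ph1_step V n Rr i :
  (forall x, exists j W, (j <= n)%nat /\ V j W /\ W x) ->
  R_disjoint X d Rr (V (S i)) -> (i < n)%nat ->
  decomposes X d Rr (Ph1 V n i) (Ph1 V n (S i)).
Proof.
intros Hcov Hd Hi A [[j [hj HG]]|[_ [-> _]]].
- apply decomp_triv. intros _. left. exists j. split; [lia|exact HG].
- apply ph1_peel; try assumption. intros; tauto.
Qed.


End Main.

Lemma Rs_mono (Rs : nat -> R) : (forall i, Rs i <= Rs (S i)) ->
  forall i j, (i <= j)%nat -> Rs i <= Rs j.
Proof.
intros H i j hij. induction hij as [|j hij IH]; [lra|]. specialize (H j). lra.
Qed.

Theorem theorem4p5 (X : Type) (d : X -> X -> R) :
  is_metric X d -> weak_hyp_C X d -> sFDC X d (whole_family X).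
Proof.
intros Hm HC Rs Rpos Rmono.
destruct (HC Rs Rpos) as [n [V [Vd [Vcov [N [rho [hrho HN]]]]]]].
pose proof Hm as [dpos [d0 [dsym dtri]]].
assert (d00 : forall x, d x x = 0) by (intros x; apply d0; reflexivity).
set (K := S (N ^ 3)).
set (m := (n + K)%nat).
set (T := Rs m).
assert (hT : 0 < T) by apply Rpos.
set (r0 := rho + T). set (b := 2 * r0). set (a := 8 * r0).
destruct (choice (fun (S : X -> Prop) (Z : X -> Prop) => (forall z, Z z -> S z) /\
    (forall z z', Z z -> Z z' -> z <> z' -> a <= d z z') /\
    (forall y, S y -> exists z, Z z /\ d y z < a))) as [Zs HZs].
{ intros S. apply maxsep_ex; [exact d00|exact dsym|unfold a, r0; lra]. }
set (Fin := Ph1 X V n n).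
assert (HFin : forall P, Fin P -> ls_doubling X d N rho P /\ exists x, P x).
{ intros P [[j [hj [hx [W [VW ->]]]]]|[h _]]; [|lia].
  split; [|exact hx].
  intros x r hr. destruct (HN W (ex_intro _ j (conj hj VW)) x r hr) as [c Hc].
  exists c. intros y By [Wy _]. exact (Hc y By Wy). }
set (Us := fun i => if Nat.leb i n then Ph1 X V n i else Ph2 X d Zs b Fin (i - n)).
exists m, Us. split; [|split].
- unfold Us. replace (Nat.leb m n) with false by (symmetry; apply Nat.leb_gt; unfold m, K; lia).
  replace (m - n)%nat with K by (unfold m; lia).
  exists (2 * b). intros B [P [FP [[j [z [_ [_ [-> _]]]]]|[-> [y hy]]]]].
  + intros x y [_ hx] [_ hy]. pose proof (dtri x z y). rewrite (dsym x z) in *. lra.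
  + exfalso. destruct (HFin P FP) as [HP _].
    apply (rem_empty X d Hm Zs b a P N rho r0 (fun S => proj1 (HZs S))
             (fun S => proj2 (proj2 (HZs S))) HP hrho) with (y := y);
      [unfold r0; lra|reflexivity|reflexivity|exact hy].
- unfold Us. simpl. intros A HA.
  apply (ph1_peel X d V n (Rs 0%nat) 0 Vcov (Vd 0%nat ltac:(lia)) ltac:(lia)).
  intros x. split; [intros; exact I|intros _; apply HA].
- intros i hi.
  assert (hRs : Rs (S i) < a - 2 * b).
  { assert (Rs (S i) <= T) by (apply Rs_mono; [exact Rmono|unfold m in *; lia]).
    unfold a, b, r0. lra. }
  assert (HZsep : forall S z z', Zs S z -> Zs S z' -> z <> z' -> a <= d z z')
    by (intros S; exact (proj1 (proj2 (HZs S)))).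
  destruct (Compare_dec.lt_eq_lt_dec i n) as [[hlt|heq]|hgt].
  + unfold Us. replace (Nat.leb i n) with true by (symmetry; apply Nat.leb_le; lia).
    replace (Nat.leb (S i) n) with true by (symmetry; apply Nat.leb_le; lia).
    apply ph1_step; [exact Vcov|apply Vd; lia|exact hlt].
  + subst i. unfold Us. replace (Nat.leb n n) with true by (symmetry; apply Nat.leb_le; lia).
    replace (Nat.leb (S n) n) with false by (symmetry; apply Nat.leb_gt; lia).
    replace (S n - n)%nat with 1%nat by lia.
    intros A HA. apply (ph2_step X d Hm Zs b a Fin (Rs (S n)) 0 HZsep hRs).
    exists A. split; [exact HA|right]. split; [reflexivity|exact (proj2 (HFin A HA))].
  + unfold Us. replace (Nat.leb i n) with false by (symmetry; apply Nat.leb_gt; lia).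
    replace (Nat.leb (S i) n) with false by (symmetry; apply Nat.leb_gt; lia).
    replace (S i - n)%nat with (S (i - n)) by lia.
    apply (ph2_step X d Hm Zs b a Fin (Rs (S i)) (i - n) HZsep hRs).
Qed.
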